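(* Let $T=(F_0,F_1)$ be the template of order $10$ and type $(4,4,4,4)$ (relational rows $0$–$3$, relational columns $0$–$3$) in which the entry in row $i$, column $j$ is the pair $F_0[i,j]F_1[i,j]$ given by row 0: 11 00 00 00 01 01 01 10 10 10; row 1: 00 11 00 00 01 01 01 10 10 10; row 2: 00 00 11 00 10 10 10 01 01 01; row 3: 00 00 00 11 10 10 10 01 01 01; row 4: 10 10 01 01 11 11 00 00 00 00; row 5: 10 10 01 01 11 11 00 00 00 00; row 6: 10 10 01 01 00 00 11 11 00 00; row 7: 01 01 10 10 00 00 11 11 00 00; row 8: 01 01 10 10 00 00 00 00 11 11; row 9: 01 01 10 10 00 00 00 00 11 11. Then there is no $4$-net of order $10$ that is a refinement of $T$.
   Context: A $k$-net of order $n$: a set of $n^2$ points and $kn$ lines (subsets of size $n$), each point on $k$ lines, lines partitioned into $k$ parallel classes $\Pi_0,\dots,\Pi_{k-1}$ of $n$ pairwise disjoint lines, lines from different classes meeting in exactly one point. For $n$ even and even $\lambda_i$, a template of order $n$ and type $(\lambda_0,\dots,\lambda_{k-1})$ is a list $(F_0,\dots,F_{k-3})$ of $n\times n$ $\{0,1\}$-arrays, $F_{t-2}$ having exactly $\lambda_t$ ones in each row and column, mutually orthogonal (for $F,F'$ with $\lambda,\mu$ ones per row, each pair $(a,b)$ occurs in exactly $f_af'_b$ cells with $f_1=\lambda,f_0=n-\lambda,f'_1=\mu,f'_0=n-\mu$), with rows $0,\dots,\lambda_0-1$ and columns $0,\dots,\lambda_1-1$ called relational, and such that for each cell $(i,j)$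 the number of ones among $x,y,F_0[i,j],\dots,F_{k-3}[i,j]$ (where $x=1$ iff row $i$ relational, $y=1$ iff column $j$ relational) is congruent to $\frac12\sum\lambda_i$ mod $2$. A $k$-net $N$ with parallel classes $\Pi_0,\dots,\Pi_{k-1}$ is a refinement of $T$ if the lines of $\Pi_0$ and $\Pi_1$ can be labelled $0,\dots,n-1$ so that, identifying each point with the cell (label of its $\Pi_0$-line, label of its $\Pi_1$-line), for every $t\ge 2$ each line of $\Pi_t$ consists of cells on which $F_{t-2}$ is constant. *)

(* Defs.v *)
From mathcomp Require Import all_boot all_fingroup.
Set Implicit Arguments. Unset Strict Implicit. Unset Printing Implicit Defensive.

Definition is_net (n k : nat) (P : finType) (L : 'I_k -> 'I_n -> {set P}) : Prop :=
  [/\ #|P| = n ^ 2,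
      (forall t i, #|L t i| = n),
      (forall t i j, i != j -> [disjoint L t i & L t j]),
      (forall t s i j, t != s -> #|L t i :&: L s j| = 1)
    & (forall x : P, #|[set p : 'I_k * 'I_n | x \in L p.1 p.2]| = k)].

(* N is a refinement of the template F (F t = F_t, i.e. the array used by
   parallel class t+2): lines of Pi_0 and Pi_1 are relabelled by bijections
   s0, s1; a point on Pi_0-line a and Pi_1-line b is the cell (s0 a, s1 b);
   each line of Pi_t (t >= 2) consists of cells on which F_(t-2) is constant. *)
Definition refines (n k : nat) (P : finType) (L : 'I_k -> 'I_n -> {set P})
    (F : nat -> 'I_n -> 'I_n -> bool) : Prop :=
  exists (s0 s1 : {perm 'I_n}),
    forall (t : 'I_k), 2 <= val t -> forall (i : 'I_n) (x y : P),
      x \in L t i -> y \in L t i ->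
      forall (t0 t1 : 'I_k) (a b c d : 'I_n), val t0 = 0 -> val t1 = 1 ->
        x \in L t0 a -> x \in L t1 b -> y \in L t0 c -> y \in L t1 d ->
        F (val t - 2) (s0 a) (s1 b) = F (val t - 2) (s0 c) (s1 d).

(* The template T of order 10, type (4,4,4,4): entry = 10*F0[i,j] + F1[i,j]. *)
Definition T_data : seq (seq nat) :=
  [:: [:: 11; 0; 0; 0; 1; 1; 1; 10; 10; 10];
      [:: 0; 11; 0; 0; 1; 1; 1; 10; 10; 10];
      [:: 0; 0; 11; 0; 10; 10; 10; 1; 1; 1];
      [:: 0; 0; 0; 11; 10; 10; 10; 1; 1; 1];
      [:: 10; 10; 1; 1; 11; 11; 0; 0; 0; 0];
      [:: 10; 10; 1; 1; 11; 11; 0; 0; 0; 0];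
      [:: 10; 10; 1; 1; 0; 0; 11; 11; 0; 0];
      [:: 1; 1; 10; 10; 0; 0; 11; 11; 0; 0];
      [:: 1; 1; 10; 10; 0; 0; 0; 0; 11; 11];
      [:: 1; 1; 10; 10; 0; 0; 0; 0; 11; 11]].

Definition T_entry (i j : 'I_10) : nat := nth 0 (nth [::] T_data i) j.

Definition T (t : nat) (i j : 'I_10) : bool :=
  if t == 0 then T_entry i j %/ 10 == 1 else T_entry i j %% 10 == 1.

(* Main.v *)
Require Import Defs.
From mathcomp Require Import all_boot all_fingroup.
Set Implicit Arguments. Unset Strict Implicit. Unset Printing Implicit Defensive.

Definition Tn (t r c : nat) : bool :=
  if t == 0 then nth 0 (nth [::] T_data r) c %/ 10 == 1
  else nth 0 (nth [::] T_data r) c %% 10 == 1.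
Definition opts (r : nat) : seq nat :=
  if r == 6 then [:: 6] else [seq c <- iota 0 10 | Tn 0 r c].
Definition final (pre : seq nat) : bool :=
  (count (fun i => Tn 1 i (nth 0 pre i)) (iota 0 10) != 4).
Fixpoint srch (k : nat) (pre : seq nat) : bool :=
  if k is k'.+1 then all (fun c => (c \in pre) || srch k' (rcons pre c)) (opts (size pre))
  else final pre.
Lemma srch_ok : srch 10 [::]. Proof. vm_compute. reflexivity. Qed.

Lemma srch_sound k pre : srch k pre -> forall s, size s = k ->
  (forall i, i < k -> nth 0 s i \in opts (size pre + i)) -> uniq (pre ++ s) ->
  final (pre ++ s).
Proof.
elim: k pre => [|k IH] pre /= Hs s.
  by move/eqP; rewrite size_eq0 => /eqP -> _ _; rewrite cats0.
case: s => [//|c s] /= [Hsz] Hopt Hu.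
have Hc : c \in opts (size pre) by have := Hopt 0 isT; rewrite addn0.
move/allP: Hs => /(_ c Hc).
have Hcn : c \notin pre.
  by move: Hu; rewrite cat_uniq /= => /and3P [_ /norP [] ].
rewrite (negbTE Hcn) /= => Hs.
rewrite -cat_rcons; apply: IH => //.
- move=> i Hi; rewrite size_rcons addSnnS; exact: (Hopt i.+1).
- by rewrite cat_rcons.
Qed.

Lemma TnE t (i j : 'I_10) : T t i j = Tn t i j. Proof. by []. Qed.

Lemma no_sigma (f : 'I_10 -> 'I_10) : injective f -> (forall r, T 0 r (f r)) ->
  val (f (inord 6)) = 6 -> \sum_(r < 10) (T 1 r (f r) : nat) != 4.
Proof.
move=> Hinj H0 H6.
pose s := [seq val (f (inord i)) | i <- iota 0 10].
have Hnth i : i < 10 -> nth 0 s i = val (f (inord i)).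
  by move=> Hi; rewrite (nth_map 0) ?size_iota // nth_iota.
have := srch_sound srch_ok (s := s).
rewrite /final cat0s.
have -> : count (fun i => Tn 1 i (nth 0 s i)) (iota 0 10) = \sum_(r < 10) (T 1 r (f r) : nat).
  rewrite -sum1_count big_mkcond (_ : iota 0 10 = index_iota 0 10) //.
  rewrite big_mkord; apply: eq_bigr => r _.
  by rewrite Hnth // inord_val TnE; case: (Tn _ _ _).
apply; first by rewrite size_map size_iota.
  move=> i Hi; rewrite Hnth // /opts add0n.
  case: ifP => [/eqP Hi6|_]; first by rewrite Hi6 H6 inE.
  rewrite mem_filter mem_iota /= ltn_ord andbT.
  by have := H0 (inord i); rewrite TnE inordK.
rewrite map_inj_in_uniq ?iota_uniq //.
move=> i j; rewrite !mem_iota /= !add0n => Hi Hj /val_inj /Hinj Heq.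
by rewrite -(@inordK 9 i) // -(@inordK 9 j) // Heq.
Qed.

Lemma net_disj (P : finType) (L : 'I_4 -> 'I_10 -> {set P}) :
  is_net L -> forall t i j x, x \in L t i -> x \in L t j -> i = j.
Proof.
case=> _ _ Hdis _ _ t i j x Hi Hj.
case: (eqVneq i j) => // Hne.
move: (Hdis t i j Hne); rewrite -setI_eq0 => /eqP H0.
have : x \in L t i :&: L t j by rewrite inE Hi Hj.
by rewrite H0 inE.
Qed.

Lemma net_line (P : finType) (L : 'I_4 -> 'I_10 -> {set P}) :
  is_net L -> forall x t, exists i, x \in L t i.
Proof.
move=> Hnet x t; case: (pickP (fun i => x \in L t i)) => [i Hi|Hno]; first by exists i.
exfalso; case: Hnet => _ _ Hdis _ Hdeg.
set S := [set p : 'I_4 * 'I_10 | x \in L p.1 p.2].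
have Hinj : {in S &, injective (fun p : 'I_4 * 'I_10 => p.1)}.
  move=> [t1 i1] [t2 i2]; rewrite !inE /= => H1 H2 Heq; subst t2.
  case: (eqVneq i1 i2) => [->//|Hne].
  move: (Hdis t1 i1 i2 Hne); rewrite -setI_eq0 => /eqP H0.
  have : x \in L t1 i1 :&: L t1 i2 by rewrite inE H1 H2.
  by rewrite H0 inE.
have Hsub : [set p.1 | p in S] \subset [set~ t].
  apply/subsetP => u /imsetP [p Hp ->]; rewrite !inE; apply/eqP => Heq.
  by move: Hp; rewrite inE Heq Hno.
have := subset_leq_card Hsub.
by rewrite card_in_imset // cardsC1 card_ord Hdeg.
Qed.

Lemma net_meet (P : finType) (L : 'I_4 -> 'I_10 -> {set P}) :
  is_net L -> forall t s i j, t != s -> exists x, L t i :&: L s j = [set x].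
Proof. by case=> _ _ _ Hm _ t s i j Hts; apply/cards1P; rewrite Hm. Qed.

Lemma meet_uniq (P : finType) (L : 'I_4 -> 'I_10 -> {set P}) :
  is_net L -> forall t s i j x y, t != s -> x \in L t i -> x \in L s j ->
  y \in L t i -> y \in L s j -> x = y.
Proof.
move=> Hnet t s i j x y Hts Hx1 Hx2 Hy1 Hy2.
have [z Hz] := net_meet Hnet i j Hts.
have : x \in L t i :&: L s j by rewrite inE Hx1 Hx2.
have : y \in L t i :&: L s j by rewrite inE Hy1 Hy2.
by rewrite Hz !inE => /eqP -> /eqP ->.
Qed.

Definition line (P : finType) (L : 'I_4 -> 'I_10 -> {set P}) t x : 'I_10 :=
  if [pick i | x \in L t i] is Some i then i else ord0.

Lemma line_in (P : finType) (L : 'I_4 -> 'I_10 -> {set P}) :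
  is_net L -> forall t x, x \in L t (line L t x).
Proof.
move=> Hnet t x; rewrite /line; case: pickP => [i //|Hno].
by have [i Hi] := net_line Hnet x t; rewrite Hno in Hi.
Qed.

Lemma line_eq (P : finType) (L : 'I_4 -> 'I_10 -> {set P}) :
  is_net L -> forall t x i, x \in L t i -> line L t x = i.
Proof. move=> Hnet t x i Hi; exact: net_disj Hnet _ _ _ _ (line_in Hnet t x) Hi. Qed.

Definition pt (P : finType) (L : 'I_4 -> 'I_10 -> {set P}) (x0 : P) t s i j : P :=
  odflt x0 [pick y in L t i :&: L s j].

Lemma pt_in (P : finType) (L : 'I_4 -> 'I_10 -> {set P}) :
  is_net L -> forall x0 t s i j, t != s -> pt L x0 t s i j \in L t i /\ pt L x0 t s i j \in L s j.
Proof.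
move=> Hnet x0 t s i j Hts; rewrite /pt; case: pickP => [y|Hno] /=.
  by rewrite inE => /andP.
have [z Hz] := net_meet Hnet i j Hts.
by move: (Hno z); rewrite /= Hz set11.
Qed.

Lemma sum40 : \sum_(a : 'I_10) \sum_(b : 'I_10) (T 1 a b : nat) = 40.
Proof.
rewrite (eq_bigr (fun a : 'I_10 => \sum_(0 <= b < 10) (Tn 1 a b : nat))); last first.
  by move=> a _; rewrite big_mkord.
rewrite -(big_mkord xpredT (fun a => \sum_(0 <= b < 10) (Tn 1 a b : nat))).
rewrite unlock. vm_compute. reflexivity.
Qed.

Theorem mainTheorem5 (P : finType) (L : 'I_4 -> 'I_10 -> {set P}) :
  is_net L -> ~ refines L T.
Proof.
move=> Hnet [s0 [s1 Href]].
pose o0 : 'I_4 := @Ordinal 4 0 isT.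
pose o1 : 'I_4 := @Ordinal 4 1 isT.
pose o2 : 'I_4 := @Ordinal 4 2 isT.
pose o3 : 'I_4 := @Ordinal 4 3 isT.
have Hc2 i x y : x \in L o2 i -> y \in L o2 i ->
    T 0 (s0 (line L o0 x)) (s1 (line L o1 x)) = T 0 (s0 (line L o0 y)) (s1 (line L o1 y)).
  move=> hx hy; apply: (Href o2 isT i x y hx hy o0 o1) => //; exact: line_in.
have Hc3 i x y : x \in L o3 i -> y \in L o3 i ->
    T 1 (s0 (line L o0 x)) (s1 (line L o1 x)) = T 1 (s0 (line L o0 y)) (s1 (line L o1 y)).
  move=> hx hy; apply: (Href o3 isT i x y hx hy o0 o1) => //; exact: line_in.
pose r6 : 'I_10 := @Ordinal 10 6 isT.
pose a6 := (s0^-1)%g r6.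
pose b6 := (s1^-1)%g r6.
have [x0 Hx0] := @net_meet _ _ Hnet o0 o1 a6 b6 isT.
have : x0 \in L o0 a6 :&: L o1 b6 by rewrite Hx0 set11.
rewrite inE => /andP [Hxa Hxb].
pose l2 := line L o2 x0.
have Hx2 : x0 \in L o2 l2 by exact: line_in.
pose yp a := pt L x0 o2 o0 l2 a.
have yp_in a : yp a \in L o2 l2 /\ yp a \in L o0 a by exact: pt_in.
pose w j := pt L x0 o2 o3 l2 j.
have w_in j : w j \in L o2 l2 /\ w j \in L o3 j by exact: pt_in.
have yp0 a : line L o0 (yp a) = a by apply: line_eq Hnet _ _ _ (yp_in a).2.
pose f (r : 'I_10) : 'I_10 := s1 (line L o1 (yp ((s0^-1)%g r))).
pose h (x : P) : nat := T 1 (s0 (line L o0 x)) (s1 (line L o1 x)).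
have F0 r : T 0 r (f r).
  have [Hy1 Hy2] := yp_in ((s0^-1)%g r).
  have := Hc2 l2 _ _ Hy1 Hx2.
  rewrite (line_eq Hnet Hy2) permKV (line_eq Hnet Hxa) (line_eq Hnet Hxb) !permKV.
  by rewrite /f => ->.
have F6 : val (f (inord 6)) = 6.
  have -> : (inord 6 : 'I_10) = r6 by apply: val_inj; rewrite /= inordK.
  rewrite /f.
  have -> : yp ((s0^-1)%g r6) = x0.
    by apply: (meet_uniq Hnet (t:=o2) (s:=o0)) (yp_in a6).1 (yp_in a6).2 Hx2 Hxa.
  by rewrite (line_eq Hnet Hxb) permKV.
have Finj : injective f.
  move=> r r' /perm_inj Heq.
  have [Hy1 Hy2] := yp_in ((s0^-1)%g r).
  have [Hy1' Hy2'] := yp_in ((s0^-1)%g r').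
  have Hl := line_in Hnet o1 (yp ((s0^-1)%g r)).
  have Hl' := line_in Hnet o1 (yp ((s0^-1)%g r')).
  rewrite Heq in Hl.
  have Ey := meet_uniq Hnet (t:=o2) (s:=o1) isT Hy1 Hl Hy1' Hl'.
  apply: (@perm_inj _ (s0^-1)%g).
  by rewrite -(yp0 ((s0^-1)%g r)) -(yp0 ((s0^-1)%g r')) Ey.
pose pi a := line L o3 (yp a).
have piinj : injective pi.
  move=> a a' Heq.
  have H1 := line_in Hnet o3 (yp a).
  have H2 := line_in Hnet o3 (yp a').
  rewrite -/(pi a) -/(pi a') -Heq in H1 H2.
  have Ey := meet_uniq Hnet (t:=o2) (s:=o3) isT (yp_in a).1 H1 (yp_in a').1 H2.
  by rewrite -(yp0 a) -(yp0 a') Ey.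
have C : \sum_(r < 10) (T 1 r (f r) : nat) = \sum_(j < 10) h (w j).
  rewrite (reindex_inj (@perm_inj _ s0)) [RHS](reindex_inj piinj) /=.
  apply: eq_bigr => a _.
  have Ey : yp a = w (pi a).
    apply: (meet_uniq Hnet (t:=o2) (s:=o3) isT (yp_in a).1 (line_in Hnet o3 (yp a))).
      exact: (w_in (pi a)).1.
    exact: (w_in (pi a)).2.
  by rewrite /f permK -Ey /h yp0.
have B : \sum_(x : P) h x = 10 * \sum_(j < 10) h (w j).
  rewrite big_distrr /= (partition_big (line L o3) predT) //.
  apply: eq_bigr => j _.
  rewrite (eq_bigr (fun _ => h (w j))); last first.
    move=> x /andP [_ /eqP Hx].
    rewrite /h (Hc3 j x (w j)) //; first by rewrite -Hx; exact: line_in.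
    exact: (w_in j).2.
  rewrite (eq_bigl (fun x => x \in L o3 j)); last first.
    move=> x /=; apply/eqP/idP => [<-|Hx]; [exact: line_in | exact: line_eq].
  rewrite sum_nat_const.
  by case: Hnet => _ -> _ _ _.
have A : \sum_(x : P) h x = 40.
  rewrite (partition_big (fun x => (line L o0 x, line L o1 x)) predT) //.
  rewrite (eq_bigr (fun c => (T 1 (s0 c.1) (s1 c.2) : nat))); last first.
    move=> [a b] _.
    have [z Hz] := @net_meet _ _ Hnet o0 o1 a b isT.
    have : z \in L o0 a :&: L o1 b by rewrite Hz set11.
    rewrite inE => /andP [Hz1 Hz2].
    rewrite (big_pred1 z); first by rewrite /h (line_eq Hnet Hz1) (line_eq Hnet Hz2).
    move=> x /=; rewrite xpair_eqE; apply/andP/eqP => [[/eqP Ha /eqP Hb]|->].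
      have : x \in L o0 a :&: L o1 b by rewrite inE -Ha -Hb !line_in.
      by rewrite Hz inE => /eqP.
    by rewrite (line_eq Hnet Hz1) (line_eq Hnet Hz2) !eqxx.
  rewrite -(pair_big predT predT (fun a b => (T 1 (s0 a) (s1 b) : nat))) /=.
  rewrite (eq_bigr (fun a => \sum_(b < 10) (T 1 (s0 a) b : nat))); last first.
    by move=> a _; rewrite [RHS](reindex_inj (@perm_inj _ s1)).
  rewrite [LHS](reindex_inj (@perm_inj _ (s0^-1)%g)) /=.
  rewrite (eq_bigr (fun a => \sum_(b < 10) (T 1 a b : nat))); last first.
    by move=> a _; rewrite permKV.
  exact: sum40.
have : 10 * \sum_(j < 10) h (w j) = 10 * 4 by rewrite -B A.
move/eqP; rewrite eqn_pmul2l // -C => /eqP H4.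
by move/eqP: (no_sigma Finj F0 F6).
Qed.
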